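(* Let $X$ be a fibrewise pointed space over $B$. Then (4) $\mathrm{cat}^B_B(X)\le\mathrm{TC}^B_B(X)\le\mathrm{cat}^B_B(X\times_BX)$; and (5) for every continuous map $\lambda:B'\to B$, $\mathrm{TC}^{B'}_{B'}(\lambda^*(X))\le\mathrm{TC}^B_B(X)$.
   Context: A fibrewise space over $B$ is a space $X$ with $p_X:X\to B$; fibrewise maps satisfy $p_Y\circ f=p_X$. A fibrewise pointed space has $s_X:B\to X$ with $p_X\circ s_X=1_B$; fibrewise pointed maps satisfy also $f\circ s_X=s_Y$. A fibrewise pointed homotopy $H:X\times I\to Y$ satisfies $p_Y(H(x,t))=p_X(x)$ and $H(s_X(b),t)=s_Y(b)$; written $\simeq^B_B$. For a fibrewise pointed map $f:E\to X$, an open $U\supseteq s_X(B)$ is fibrewise pointed sectional if there is a fibrewise pointed map $s:U\to E$ with $f\circ s\simeq^B_B$ the inclusion; $\mathrm{secat}^B_B(f)$ is the least $n$ such that $X$ is covered by $n+1$ such open sets. The James–Morris fibrewise L.-S. category is $\mathrm{cat}^B_B(X)=\mathrm{secat}^B_B(s_X)$ ($B$ pointed by $1_B$), i.e. the least $n$ such that $X$ is covered by $n+1$ open sets $U\supseteq s_X(B)$ whose inclusion is fibrewise pointed homotopic to $s_X\circ p_X|_U$. $X\times_BX=\{(x,y):p_X(x)=p_X(y)\}$ with section $b\mapsto(s_X(b),s_X(b))$; $P_B(X)=\{(b,\alpha)\in B\times X^I:p_X\circ\alpha\equiv b\}$ with projection $(b,\alpha)\mapsto b$ and section $b\mapsto(b,c_{s_X(b)})$;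 $\Pi_X(b,\alpha)=(\alpha(0),\alpha(1))$; $\mathrm{TC}^B_B(X):=\mathrm{secat}^B_B(\Pi_X)$. For $\lambda:B'\to B$, $\lambda^*(X)=\{(b',x)\in B'\times X:\lambda(b')=p_X(x)\}$ with projection $(b',x)\mapsto b'$ and section $b'\mapsto(b',s_X(\lambda(b')))$, a fibrewise pointed space over $B'$. *)

(* Defs.v *)
From HB Require Import structures.
From mathcomp Require Import all_boot all_order all_algebra.
From mathcomp Require Import all_classical all_reals.
From mathcomp Require Import topology num_topology function_spaces subtype_topology ereal.
Import numFieldTopology.Exports.
Set Implicit Arguments. Unset Strict Implicit. Unset Printing Implicit Defensive.
Import Order.TTheory GRing.Theory Num.Theory.
Local Open Scope classical_set_scope.
Local Open Scope ring_scope.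

Notation II R := (set_type [set x : R | 0 <= x <= 1]).

Lemma II0_mem (R : realType) : (0 : R) \in [set x : R | 0 <= x <= 1].
Proof. by apply: mem_set; rewrite /= ?lexx ?ler01. Qed.
Lemma II1_mem (R : realType) : (1 : R) \in [set x : R | 0 <= x <= 1].
Proof. by apply: mem_set; rewrite /= ?lexx ?ler01. Qed.
Definition I0 (R : realType) : II R := exist (fun w => w \in [set x : R | 0 <= x <= 1]) 0 (II0_mem R).
Definition I1 (R : realType) : II R := exist (fun w => w \in [set x : R | 0 <= x <= 1]) 1 (II1_mem R).

(** A fibrewise pointed space over B (data + the equation p o s = 1_B);
    continuity of p and s is the separate predicate [is_fpspace]. *)
Record fpsp (B : topologicalType) := FPSp {
  fp_T :> topologicalType;
  fp_p : fp_T -> B;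
  fp_s : B -> fp_T;
  fp_ps : forall b, fp_p (fp_s b) = b }.
Arguments fp_T {B} _.
Arguments fp_p {B} _ _.
Arguments fp_s {B} _ _.
Arguments fp_ps {B} _ _.

Definition is_fpspace (B : topologicalType) (X : fpsp B) :=
  continuous (fp_p X) /\ continuous (fp_s X).

Definition fp_sectional (R : realType) (B : topologicalType) (E X : fpsp B)
    (f : E -> X) (U : set X) : Prop :=
  [/\ open U, range (fp_s X) `<=` U &
   exists s : X -> E,
     [/\ {within U, continuous s},
         (forall x, U x -> fp_p E (s x) = fp_p X x),
         (forall b, s (fp_s X b) = fp_s E b) &
     exists H : X * II R -> X,
       [/\ {within U `*` setT, continuous H},
           (forall x t, U x -> fp_p X (H (x, t)) = fp_p X x),
           (forall b t, H (fp_s X b, t) = fp_s X b),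
           (forall x, U x -> H (x, I0 R) = f (s x)) &
           (forall x, U x -> H (x, I1 R) = x)]]].

(** X is covered by n+1 fibrewise pointed sectional open sets. *)
Definition secat_le (R : realType) (B : topologicalType) (E X : fpsp B)
    (f : E -> X) (n : nat) : Prop :=
  exists Us : nat -> set X,
    (forall i, (i <= n)%N -> fp_sectional R f (Us i)) /\
    (forall x : X, exists i, (i <= n)%N /\ Us i x).

(** secat^B_B(f) in N u {+oo} (as an extended real; +oo if no such n). *)
Definition secat (R : realType) (B : topologicalType) (E X : fpsp B)
    (f : E -> X) : \bar R :=
  ereal_inf [set (n%:R)%:E | n in secat_le R f].

Definition fp_base (B : topologicalType) : fpsp B :=
  @FPSp B B id id (fun _ => erefl).

Definition fwcat (R : realType) (B : topologicalType) (X : fpsp B) : \bar R :=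
  @secat R B (fp_base B) X (fp_s X).

Definition fibprod_set (B : topologicalType) (X : fpsp B) : set (X * X) :=
  [set z | fp_p X z.1 = fp_p X z.2].
Arguments fibprod_set {B} X.

Lemma fibprod_s_mem (B : topologicalType) (X : fpsp B) (b : B) :
  (fp_s X b, fp_s X b) \in fibprod_set X.
Proof. by apply: mem_set. Qed.

Definition fibprod (B : topologicalType) (X : fpsp B) : fpsp B.
Proof.
refine (@FPSp B (set_type (fibprod_set X))
  (fun z => fp_p X (val z).1)
  (fun b => exist (fun w => w \in fibprod_set X) (fp_s X b, fp_s X b) (fibprod_s_mem X b)) (fun b => fp_ps X b)).
Defined.

Definition pathsp_set (R : realType) (B : topologicalType) (X : fpsp B)
    : set (B * {compact-open, II R -> X}) :=
  [set z | continuous (z.2 : II R -> X) /\ forall t, fp_p X (z.2 t) = z.1].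
Arguments pathsp_set R {B} X.

Lemma pathsp_s_mem (R : realType) (B : topologicalType) (X : fpsp B) (b : B) :
  (b, ((fun _ => fp_s X b) : {compact-open, II R -> X})) \in pathsp_set R X.
Proof. apply: mem_set; split; [exact: cst_continuous | by move=> t; exact: fp_ps]. Qed.

Definition pathsp (R : realType) (B : topologicalType) (X : fpsp B) : fpsp B.
Proof.
refine (@FPSp B (set_type (pathsp_set R X))
  (fun z => (val z).1)
  (fun b => exist (fun z => z \in pathsp_set R X) _ (pathsp_s_mem R X b)) (fun b => erefl)).
Defined.

Lemma Pi_mem (R : realType) (B : topologicalType) (X : fpsp B)
    (z : set_type (pathsp_set R X)) :
  ((val z).2 (I0 R), (val z).2 (I1 R)) \in fibprod_set X.
Proof.
apply: mem_set; have [_ h] := set_valP z; rewrite /fibprod_set /=.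
by rewrite (h (I0 R)) (h (I1 R)).
Qed.

Definition Pi (R : realType) (B : topologicalType) (X : fpsp B) :
  pathsp R X -> fibprod X := fun z => exist (fun w => w \in fibprod_set X) _ (Pi_mem z).

Definition fwTC (R : realType) (B : topologicalType) (X : fpsp B) : \bar R :=
  @secat R B (pathsp R X) (fibprod X) (@Pi R B X).

Definition pullback_set (B B' : topologicalType) (lam : B' -> B) (X : fpsp B)
    : set (B' * X) := [set z | lam z.1 = fp_p X z.2].
Arguments pullback_set {B B'} lam X.

Lemma pullback_s_mem (B B' : topologicalType) (lam : B' -> B) (X : fpsp B)
    (b' : B') : (b', fp_s X (lam b')) \in pullback_set lam X.
Proof. by apply: mem_set; rewrite /pullback_set /= fp_ps. Qed.

Definition pullback (B B' : topologicalType) (lam : B' -> B) (X : fpsp B)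
    : fpsp B'.
Proof.
refine (@FPSp B' (set_type (pullback_set lam X))
  (fun z => (val z).1)
  (fun b' => exist (fun z => z \in pullback_set lam X) _ (pullback_s_mem lam X b')) (fun b => erefl)).
Defined.
Arguments secat R {B E X} f.
Arguments fwcat R {B} X.
Arguments fwTC R {B} X.
Arguments fibprod {B} X.
Arguments pullback {B B'} lam X.

(* Main.v *)
Require Import Defs.
From HB Require Import structures.
From mathcomp Require Import all_boot all_order all_algebra.
From mathcomp Require Import all_classical all_reals.
From mathcomp Require Import topology num_topology function_spaces subtype_topology ereal normedtype.
Import numFieldTopology.Exports.
Set Implicit Arguments. Unset Strict Implicit. Unset Printing Implicit Defensive.
Import Order.TTheory GRing.Theory Num.Theory.
Local Open Scope classical_set_scope.
Local Open Scope ring_scope.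


Lemma curry_at {U V W : topologicalType} (f : U * V -> W) (x : U) :
  (forall v, {for (x, v), continuous f}) ->
  {for x, continuous (curry f : U -> {compact-open, V -> W})}.
Proof.
move=> ctsf; apply/compact_open_cvgP => K O /= cptK oO fKO.
near=> z => w /= [+ + <-]; near: z.
move/compact_near_coveringP/near_covering_withinP : cptK; apply.
move=> v Kv; have [[P Q] [Px Qv] PQfO] : nbhs (x, v) (f @^-1` O).
  by apply: ctsf; move: oO; rewrite openE; apply; apply: fKO; exists v.
by exists (Q, P) => // -[b a] /= [Qb Pa] Kb; exact: PQfO.
Unshelve. all: by end_near. Qed.

Lemma eval_at {V W : topologicalType} (u : {compact-open, V -> W}) (v : V) :
  compact [set: V] -> @regular_space V -> continuous (u : V -> W) ->
  {for (u, v), continuous (fun p : {compact-open, V -> W} * V => p.1 p.2)}.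
Proof.
move=> cptV reg cfp D; rewrite /= nbhsE => -[O [oO Ofuv]] /filterS.
apply; pose B := [set: V].
have [R Rv RO] : exists2 R, nbhs v R & forall z, closure R z -> O (u z).
  have [] := reg v (u @^-1` O); first by apply: cfp; exact: open_nbhs_nbhs.
  by move=> R ? ?; exists R.
exists ([set g : {compact-open, V -> W} | g @` (B `&` closure R) `<=` O], B `&` closure R).
  split; [apply/open_nbhs_nbhs; split | apply: filterI] => //.
  - apply: compact_open_open => //; apply: compact_closedI => //.
    exact: closed_closure.
  - by move=> ? [x [? + <-]]; apply: RO.
  - exact: filterT.
  - by apply: filterS; first exact: subset_closure.
by case=> a r /= [fBMO [Br] cmR]; apply: fBMO; exists r.
Qed.

Lemma set_type_at {X Y : topologicalType} (A : set Y) (f : X -> set_type A) (x : X) :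
  {for x, continuous (set_val \o f)} -> {for x, continuous f}.
Proof.
move=> cf U [?/= [[W oW <-]]] /= Wsfz /filterS; apply; apply: cf.
exact: open_nbhs_nbhs.
Qed.

Lemma near_eq_at {X Y : topologicalType} (f g : X -> Y) (x : X) :
  (\forall y \near x, f y = g y) -> {for x, continuous g} -> {for x, continuous f}.
Proof.
move=> e cg U; rewrite (nbhs_singleton e) => /cg Ng.
have : nbhs x (g @^-1` U) := Ng.
move=> Ng'; have NN := @filterI _ _ (nbhs_filter x) _ _ e Ng'.
suff : nbhs x [set y | U (f y)] by [].
by apply: (@filterS _ _ (nbhs_filter x) _ _ _ NN) => y [/= ->].
Qed.

Lemma glue_at {X Y : topologicalType} (f g : X -> Y) (P : X -> bool) (x : X) :
  {for x, continuous f} -> {for x, continuous g} -> f x = g x ->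
  {for x, continuous (fun y => if P y then f y else g y)}.
Proof.
move=> cf cg e U Uh; have Uf : nbhs (f x) U.
  by move: Uh; case: (P x) => //; rewrite e.
have /cf Nf := Uf; rewrite e in Uf; have /cg Ng := Uf.
have Nf' : nbhs x (f @^-1` U) := Nf; have Ng' : nbhs x (g @^-1` U) := Ng.
have NN := @filterI _ _ (nbhs_filter x) _ _ Nf' Ng'.
suff : nbhs x [set y | U (if P y then f y else g y)] by [].
by apply: (@filterS _ _ (nbhs_filter x) _ _ _ NN) => y [/= fU gU]; case: (P y).
Qed.

Section II.
Variable R : realType.

Lemma clamp_mem (r : R) : Num.min (Num.max r 0) 1 \in [set x : R | 0 <= x <= 1].
Proof.
apply: mem_set => /=; rewrite le_min ge_min ler01 lexx orbT andbT.
by rewrite le_max lexx orbT.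
Qed.

Definition clampI (r : R) : II R := exist (fun w => w \in [set x : R | 0 <= x <= 1]) _ (clamp_mem r).

Lemma clampI_val (r : R) : 0 <= r <= 1 -> set_val (clampI r) = r.
Proof.
case/andP=> r0 r1; rewrite /= /set_val /=.
by rewrite (@max_l _ _ r 0) // (@min_l _ _ r 1).
Qed.

Lemma II_eq (a b : II R) : set_val a = set_val b -> a = b.
Proof. by move=> h; apply/eq_sig_hprop; [move=> ?; exact: Prop_irrelevance|]. Qed.

Lemma clampI0 : clampI 0 = I0 R.
Proof. by apply: II_eq; rewrite clampI_val // lexx ler01. Qed.

Lemma clampI1 : clampI 1 = I1 R.
Proof. by apply: II_eq; rewrite clampI_val // lexx ler01. Qed.

Lemma val_cont : continuous (set_val : II R -> R).
Proof. exact: initial_continuous. Qed.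

Lemma clampI_cont : continuous clampI.
Proof.
move=> x; apply: set_type_at.
have -> : set_val \o clampI = (fun r : R => Num.min (Num.max r 0) 1) by [].
apply: (@continuous_min R R (fun r : R => Num.max r 0) (fun _ => 1)).
  by apply: (@continuous_max R R id (fun _ => 0)) => //; exact: cvg_cst.
exact: cvg_cst.
Qed.

Lemma aff_cont (a b : R) : continuous (fun t : II R => clampI (a + b * set_val t)).
Proof.
move=> t; apply: (@continuous_comp _ _ _ (fun t : II R => a + b * set_val t) clampI); last exact: clampI_cont.
have := @cvgD R R^o _ (nbhs t) (nbhs_filter t) (fun=> a) (fun t : II R => b * set_val t) a (b * set_val t).
apply; first exact: cvg_cst.
have := @cvgM R _ (nbhs t) (nbhs_filter t) (fun=> b) (fun t : II R => set_val t) b (set_val t).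
by apply; [exact: cvg_cst | exact: val_cont].
Qed.

Lemma II_compact : compact [set: II R].
Proof.
have -> : [set: II R] = clampI @` `[0, 1].
  apply/seteqP; split => // t _; exists (set_val t).
    by have := set_valP t; rewrite /= in_itv /=.
  by apply: II_eq; rewrite clampI_val //; have := set_valP t.
apply: continuous_compact; first exact: continuous_subspaceT clampI_cont.
exact: segment_compact.
Qed.

Lemma II_regular : @regular_space (II R).
Proof. exact: uniform_regular. Qed.

End II.


Lemma sval_eq {T : Type} (A : set T) (a b : set_type A) : set_val a = set_val b -> a = b.
Proof. by move=> h; apply/eq_sig_hprop; [move=> ?; exact: Prop_irrelevance|]. Qed.

Definition sub_or {T : Type} (A : set T) (d : set_type A) (x : T) : set_type A :=
  match pselect (A x) with
  | left h => exist (fun w => w \in A) x (mem_set h)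
  | right _ => d end.

Lemma sub_orE {T : Type} (A : set T) (d : set_type A) (x : T) : A x -> set_val (sub_or d x) = x.
Proof. by rewrite /sub_or; case: pselect. Qed.

Lemma sub_orEs {T : Type} (A : set T) (d : set_type A) (x : T) : A x -> sval (sub_or d x) = x.
Proof. by rewrite /sub_or; case: pselect. Qed.

Lemma sub_or_at {Z T : topologicalType} (A : set T) (d : Z -> set_type A) (g : Z -> T) (z : Z) :
  {for z, continuous g} -> (\forall y \near z, A (g y)) ->
  {for z, continuous (fun y => sub_or (d y) (g y))}.
Proof.
move=> cg nA; apply: set_type_at; apply: near_eq_at cg.
by apply: filterS nA => y /= Ay; rewrite sub_orE.
Qed.

Lemma within_open_at {T U : topologicalType} (f : T -> U) (A : set T) x :
  open A -> {within A, continuous f} -> A x -> {for x, continuous f}.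
Proof. by move=> oA; rewrite continuous_open_subspace // => h Ax; apply: h; rewrite inE. Qed.

Lemma openXT {T V : topologicalType} (A : set T) : open A -> open (A `*` [set: V]).
Proof.
move=> oA; have -> : A `*` [set: V] = fst @^-1` A by apply/seteqP; split => -[a b] //= [].
apply: (@open_comp _ _ (@fst T V) A) => // x _; exact: cvg_fst.
Qed.

Lemma near_lt {Z : topologicalType} {R : realType} (g : Z -> R) z (c : R) :
  {for z, continuous g} -> g z < c -> \forall y \near z, g y < c.
Proof.
move=> cg gc; have N : nbhs (g z) [set x | x < c].
  by apply: open_nbhs_nbhs; split => //; exact: open_lt.
exact: (cg _ N).
Qed.

Lemma near_gt {Z : topologicalType} {R : realType} (g : Z -> R) z (c : R) :
  {for z, continuous g} -> c < g z -> \forall y \near z, c < g y.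
Proof.
move=> cg gc; have N : nbhs (g z) [set x | c < x].
  by apply: open_nbhs_nbhs; split => //; exact: open_gt.
exact: (cg _ N).
Qed.

Lemma pair_at {Z Y W : topologicalType} (f : Z -> Y) (g : Z -> W) z :
 {for z, continuous f} -> {for z, continuous g} -> {for z, continuous (fun x => (f x, g x))}.
Proof. move=> cf cg; exact: (@cvg_pair _ _ _ _ _ _ (nbhs_filter _) (nbhs_filter _) (nbhs_filter _)). Qed.

Lemma fst_at {Z Y : topologicalType} (p : Z * Y) : {for p, continuous (fun q : Z * Y => q.1)}.
Proof. exact: (@cvg_fst _ _ _ _ (nbhs_filter _)). Qed.

Lemma snd_at {Z Y : topologicalType} (p : Z * Y) : {for p, continuous (fun q : Z * Y => q.2)}.
Proof. exact: (@cvg_snd _ _ _ _ (nbhs_filter _)). Qed.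

Lemma comp_at {X Y Z : topologicalType} (f : X -> Y) (g : Y -> Z) x :
  {for x, continuous f} -> {for f x, continuous g} -> {for x, continuous (fun y => g (f y))}.
Proof. exact: continuous_comp. Qed.

Section concat.
Variable R : realType.

Definition concat2 {Z Y : Type} (a b : Z -> II R -> Y) (p : Z * II R) : Y :=
  if set_val p.2 <= 2^-1 then a p.1 (clampI (0 + 2 * set_val p.2))
  else b p.1 (clampI (-1 + 2 * set_val p.2)).

Lemma concat2_0 {Z Y : Type} (a b : Z -> II R -> Y) z : concat2 a b (z, I0 R) = a z (I0 R).
Proof.
rewrite /concat2 /= ifT; last by rewrite invr_ge0 ler0n.
by congr (a z _); rewrite mulr0 addr0 clampI0.
Qed.

Lemma concat2_1 {Z Y : Type} (a b : Z -> II R -> Y) z : concat2 a b (z, I1 R) = b z (I1 R).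
Proof.
rewrite /concat2 /= ifF; last by apply/negbTE; rewrite -ltNge invf_lt1 // ltr1n.
by congr (b z _); rewrite mulr1 -clampI1; congr clampI; rewrite addrC -addrA subrr addr0.
Qed.

Lemma piece_at {Z Y : topologicalType} (a : Z -> II R -> Y) (c d : R) z0 t :
  (forall t, {for (z0, t), continuous (fun p : Z * II R => a p.1 p.2)}) ->
  {for (z0, t), continuous (fun p : Z * II R => a p.1 (clampI (c + d * set_val p.2)))}.
Proof.
move=> ca.
apply: (@continuous_comp _ _ _ (fun p : Z * II R => (p.1, clampI (c + d * set_val p.2)))
   (fun p : Z * II R => a p.1 p.2)); last exact: ca.
apply: pair_at; first exact: fst_at.
apply: (@comp_at _ _ _ snd (fun t : II R => clampI (c + d * set_val t))).
  exact: snd_at.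
exact: aff_cont.
Qed.

Lemma concat2_at {Z Y : topologicalType} (a b : Z -> II R -> Y) z0 :
  (forall t, {for (z0, t), continuous (fun p : Z * II R => a p.1 p.2)}) ->
  (forall t, {for (z0, t), continuous (fun p : Z * II R => b p.1 p.2)}) ->
  a z0 (I1 R) = b z0 (I0 R) ->
  forall t, {for (z0, t), continuous (concat2 a b)}.
Proof.
move=> ca cb e t.
have cv : {for (z0, t), continuous (fun p : Z * II R => set_val p.2)}.
  apply: (@comp_at _ _ _ snd (fun t : II R => set_val t)); first exact: snd_at.
  exact: val_cont.
have [lt|gt|eq] := ltgtP (set_val t) (2^-1).
- apply: (@near_eq_at _ _ _ (fun p : Z * II R => a p.1 (clampI (0 + 2 * set_val p.2)))).
    apply: filterS (near_lt cv lt) => p /= h; rewrite /concat2 ifT //; exact: ltW.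
  exact: piece_at.
- apply: (@near_eq_at _ _ _ (fun p : Z * II R => b p.1 (clampI (-1 + 2 * set_val p.2)))).
    by apply: filterS (near_gt cv gt) => p /= h; rewrite /concat2 ifF //; apply/negbTE; rewrite -ltNge.
  exact: piece_at.
- apply: glue_at; [exact: piece_at | exact: piece_at |].
  by rewrite /= eq mulfV ?pnatr_eq0 // add0r clampI1 e addrC subrr clampI0.
Qed.

End concat.


Lemma val_at {T : topologicalType} (A : set T) (x : set_type A) :
  {for x, continuous (set_val : set_type A -> T)}.
Proof. exact: initial_continuous. Qed.

Lemma all_near {T : topologicalType} (P : T -> Prop) (x : T) :
  (forall y, P y) -> \forall y \near x, P y.
Proof. by move=> h; apply: (@nearW _ _ _ (nbhs_filter x)). Qed.

Lemma near_open {T : topologicalType} (U : set T) (x : T) :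
  open U -> U x -> \forall y \near x, U y.
Proof. by move=> oU Ux; apply: open_nbhs_nbhs. Qed.

Lemma near_mono {T : topologicalType} (P Q : T -> Prop) (x : T) :
  (forall y, P y -> Q y) -> (\forall y \near x, P y) -> \forall y \near x, Q y.
Proof. by move=> h; apply: (@filterS _ _ (nbhs_filter x)). Qed.

Lemma cst_at {T U : topologicalType} (c : U) (x : T) : {for x, continuous (fun _ : T => c)}.
Proof. exact: (@cvg_cst _ c _ _ (nbhs_filter x)). Qed.

Lemma id_at {T : topologicalType} (x : T) : {for x, continuous (fun y : T => y)}.
Proof. exact: cvg_id. Qed.

Lemma slice_at {Z T Y : topologicalType} (F : Z * T -> Y) z t :
  {for (z, t), continuous F} -> {for t, continuous (fun t => F (z, t))}.
Proof.
move=> cF; apply: (comp_at (f := fun t => (z, t)) (g := F)) => //.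
by apply: pair_at; [exact: cst_at | exact: id_at].
Qed.

Section part2.
Variables (R : realType) (B : topologicalType) (X : fpsp B).
Hypothesis cp : continuous (fp_p X).

Lemma part2 (U : set (fibprod X)) :
  @fp_sectional R B (fp_base B) (fibprod X) (fp_s (fibprod X)) U -> fp_sectional R (@Pi R B X) U.
Proof.
case=> oU sU [s [cs ps ss [H [cH pH sH H0 H1]]]].
have cHat : forall z t, U z -> {for (z, t), continuous H}.
  by move=> z t Uz; apply: (within_open_at (openXT oU) cH).
pose a' (z : fibprod X) (t : II R) : X := (set_val (H (z, t))).1.
pose a (z : fibprod X) (t : II R) : X := a' z (clampI (1 + (-1) * set_val t)).
pose b (z : fibprod X) (t : II R) : X := (set_val (H (z, t))).2.
pose F := concat2 a b.
have Fc : forall z t, U z -> {for (z, t), continuous F}.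
  move=> z t Uz; apply: concat2_at.
  - move=> t'; apply: piece_at => t''.
    apply: (near_eq_at (g := fun p => (set_val (H p)).1)); first by apply: all_near => -[].
    apply: (comp_at (f := H) (g := fun w : fibprod X => (set_val w).1)); first exact: cHat.
    apply: (comp_at (g := fst)); [exact: val_at | exact: fst_at].
  - move=> t'; apply: (near_eq_at (g := fun p => (set_val (H p)).2)); first by apply: all_near => -[].
    apply: (comp_at (f := H) (g := fun w : fibprod X => (set_val w).2)); first exact: cHat.
    apply: (comp_at (g := snd)); [exact: val_at | exact: snd_at].
    by rewrite /a /b /a' mulN1r [set_val (I1 R)]/= subrr clampI0 H0.
have Fp : forall z t, U z -> fp_p X (F (z, t)) = fp_p X (set_val z).1.
  move=> z t Uz; rewrite /F /concat2 /=; case: ifP => _.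
    by rewrite /a /a'; have := pH z (clampI (1 + (-1) * set_val (clampI (0 + 2 * set_val t)))) Uz.
  rewrite /b; have := pH z (clampI (-1 + 2 * set_val t)) Uz => /= <-.
  by have := set_valP (H (z, clampI (-1 + 2 * set_val t))); rewrite /fibprod_set /= => ->.
pose g (z : fibprod X) : B * {compact-open, II R -> X} :=
  (fp_p X (set_val z).1, (curry F z : {compact-open, II R -> X})).
pose sig (z : fibprod X) : pathsp R X :=
  sub_or (fp_s (pathsp R X) (fp_p X (set_val z).1)) (g z).
have gmem : forall z, U z -> pathsp_set R X (g z).
  move=> z Uz; split; first by move=> t; apply: slice_at; exact: Fc.
  by move=> t; exact: Fp.
have F0 : forall z, U z -> F (z, I0 R) = (set_val z).1.
  by move=> z Uz; rewrite /F concat2_0 /a /a' [set_val (I0 R)]/= mulr0 addr0 clampI1 H1.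
have F1 : forall z, U z -> F (z, I1 R) = (set_val z).2.
  by move=> z Uz; rewrite /F concat2_1 /b H1.
split => //; exists sig; split.
- rewrite continuous_open_subspace // => z /set_mem Uz.
  apply: (sub_or_at (A := pathsp_set R X) (d := fun z : fibprod X => fp_s (pathsp R X) (fp_p X (set_val z).1)) (g := g)); last first.
    by apply: (near_mono gmem); exact: near_open.
  apply: pair_at.
    apply: (comp_at (f := fun z : fibprod X => (set_val z).1)); last exact: cp.
    apply: (comp_at (g := fst)); [exact: val_at | exact: fst_at].
  by apply: curry_at => v; exact: Fc.
- by move=> z Uz; rewrite /= sub_orEs //; exact: gmem.
- move=> b0; have Ub : U (fp_s (fibprod X) b0) by apply: sU; exists b0.
  apply: sval_eq; rewrite /sig /= ?sub_orE ?sub_orEs; last exact: gmem.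
  rewrite /g /= fp_ps; congr pair; apply: funext => t.
  rewrite /curry /F /concat2 /=; case: ifP => _; rewrite /a /a' /b sH //.
exists fst; split => //.
- by apply: continuous_subspaceT => p; exact: fst_at.
- move=> z Uz; apply: sval_eq; rewrite /Pi !set_valE /= /sig sub_orEs; last exact: gmem.
  by rewrite /g /= /curry F0 // F1 // !set_valE -surjective_pairing.
Qed.
End part2.


Section part1.
Variables (R : realType) (B : topologicalType) (X : fpsp B).
Hypothesis cp : continuous (fp_p X).
Hypothesis cs : continuous (fp_s X).

Definition jX (x : X) : fibprod X :=
  sub_or (fp_s (fibprod X) (fp_p X x)) (fp_s X (fp_p X x), x).

Lemma jX_mem (x : X) : fibprod_set X (fp_s X (fp_p X x), x).
Proof. by rewrite /fibprod_set /= fp_ps. Qed.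

Lemma jX_val (x : X) : sval (jX x) = (fp_s X (fp_p X x), x).
Proof. by rewrite /jX sub_orEs //; exact: jX_mem. Qed.

Lemma jX_cont : continuous jX.
Proof.
move=> x; apply: (sub_or_at (A := fibprod_set X) (d := fun x => fp_s (fibprod X) (fp_p X x))
  (g := fun x => (fp_s X (fp_p X x), x))); last by apply: all_near; exact: jX_mem.
apply: pair_at; last exact: id_at.
by apply: (comp_at (f := fp_p X)); [exact: cp | exact: cs].
Qed.

Lemma jX_s (b : B) : jX (fp_s X b) = fp_s (fibprod X) b.
Proof. by apply: sval_eq; rewrite !set_valE /= jX_val fp_ps. Qed.

Lemma part1 (U : set (fibprod X)) :
  fp_sectional R (@Pi R B X) U ->
  @fp_sectional R B (fp_base B) X (fp_s X) (jX @^-1` U).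
Proof.
case=> oU sU [sig [csig psig ssig [G [cG pG sG G0 G1]]]].
have cGat : forall z t, U z -> {for (z, t), continuous G}.
  by move=> z t Uz; apply: (within_open_at (openXT oU) cG).
have csat : forall z, U z -> {for z, continuous sig}.
  by move=> z Uz; apply: (within_open_at oU csig).
have oV : open (jX @^-1` U) by apply: open_comp => // x _; exact: jX_cont.
have Ujs : forall b, U (jX (fp_s X b)) by move=> b; rewrite jX_s; apply: sU; exists b.
pose a'' (x : X) (t : II R) : X := (sval (G (jX x, t))).1.
pose a (x : X) (t : II R) : X := a'' x (clampI (1 + (-1) * set_val t)).
pose bb (x : X) (t : II R) : X := (sval (sig (jX x))).2 t.
pose c (x : X) (t : II R) : X := (sval (G (jX x, t))).2.
pose b' (x : X) (t : II R) : X := concat2 bb c (x, t).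
pose Hc := concat2 a b'.
have cGj : forall x t, U (jX x) -> {for (x, t), continuous (fun p : X * II R => G (jX p.1, p.2))}.
  move=> x t Ux; apply: (comp_at (f := fun p : X * II R => (jX p.1, p.2)) (g := G)); last exact: cGat.
  apply: pair_at; last exact: snd_at.
  by apply: (comp_at (f := fst)); [exact: fst_at | exact: jX_cont].
have ca'' : forall x t, U (jX x) -> {for (x, t), continuous (fun p : X * II R => a'' p.1 p.2)}.
  move=> x t Ux; apply: (comp_at (f := fun p : X * II R => G (jX p.1, p.2))
     (g := fun w : fibprod X => (sval w).1)); first exact: cGj.
  apply: (comp_at (g := fst)); [exact: val_at | exact: fst_at].
have cc : forall x t, U (jX x) -> {for (x, t), continuous (fun p : X * II R => c p.1 p.2)}.
  move=> x t Ux; apply: (comp_at (f := fun p : X * II R => G (jX p.1, p.2))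
     (g := fun w : fibprod X => (sval w).2)); first exact: cGj.
  apply: (comp_at (g := snd)); [exact: val_at | exact: snd_at].
have cbb : forall x t, U (jX x) -> {for (x, t), continuous (fun p : X * II R => bb p.1 p.2)}.
  move=> x t Ux.
  apply: (comp_at (f := fun p : X * II R => ((sval (sig (jX p.1))).2 : {compact-open, II R -> X}, p.2))
     (g := fun q : {compact-open, II R -> X} * II R => q.1 q.2)); last first.
    apply: eval_at; [exact: II_compact | exact: II_regular |].
    by have [] := set_valP (sig (jX x)).
  apply: pair_at; last exact: snd_at.
  apply: (comp_at (f := fun p : X * II R => sig (jX p.1)) (g := fun w : pathsp R X => (sval w).2)).
    apply: (comp_at (f := fun p : X * II R => jX p.1)); last exact: csat.
    by apply: (comp_at (f := fst)); [exact: fst_at | exact: jX_cont].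
  apply: (comp_at (g := snd)); [exact: val_at | exact: snd_at].
have Pi0 : forall z, U z -> (sval (G (z, I0 R))).1 = (sval (sig z)).2 (I0 R).
  by move=> z Uz; rewrite G0.
have Pi1 : forall z, U z -> (sval (G (z, I0 R))).2 = (sval (sig z)).2 (I1 R).
  by move=> z Uz; rewrite G0.
have cb' : forall x t, U (jX x) -> {for (x, t), continuous (fun p : X * II R => b' p.1 p.2)}.
  move=> x t Ux; apply: (near_eq_at (g := concat2 bb c)); first by apply: all_near => -[].
  apply: concat2_at; [by move=> ?; exact: cbb | by move=> ?; exact: cc |].
  by rewrite /bb /c Pi1.
have cHc : forall x t, U (jX x) -> {for (x, t), continuous Hc}.
  move=> x t Ux; apply: concat2_at => //.
  - by move=> t'; apply: piece_at => t''; exact: ca''.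
  - by move=> t'; exact: cb'.
  - rewrite /a /a'' /b' concat2_0 /bb mulN1r [set_val (I1 R)]/= subrr clampI0.
    exact: Pi0.
split; [exact: oV | by move=> _ [b _ <-]; apply: Ujs |].
exists (fp_p X); split.
- by apply: continuous_subspaceT.
- by [].
- exact: fp_ps.
exists Hc; split.
- rewrite continuous_open_subspace; last exact: openXT.
  by move=> [x t] /set_mem [/= Ux _]; exact: cHc.
- move=> x t Ux.
  have pj : fp_p X (sval (jX x)).1 = fp_p X x by rewrite jX_val /= fp_ps.
  have pa : forall t, fp_p X (sval (G (jX x, t))).1 = fp_p X x.
    by move=> t'; have := pG (jX x) t' Ux; rewrite /= ?set_valE => ->.
  have pc : forall t, fp_p X (sval (G (jX x, t))).2 = fp_p X x.
    by move=> t'; have := set_valP (G (jX x, t')); rewrite /fibprod_set /= => <-.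
  have pb : forall t, fp_p X ((sval (sig (jX x))).2 t) = fp_p X x.
    move=> t'; have [_ h] := set_valP (sig (jX x)); rewrite h.
    by have := psig (jX x) Ux; rewrite /= ?set_valE => ->.
  rewrite /Hc /concat2 /=; case: ifP => _; first exact: pa.
  by rewrite /b' /concat2 /=; case: ifP => _; [exact: pb | exact: pc].
- move=> b t; rewrite /Hc /concat2 /a /a'' /b' /bb /c /= !jX_s !sG.
  case: ifP => _ //; rewrite /concat2 /= jX_s sG ssig.
  by case: ifP => _.
- move=> x Ux; rewrite /Hc concat2_0 /a /a'' [set_val (I0 R)]/= mulr0 addr0 clampI1 G1 //.
  by rewrite jX_val.
- move=> x Ux; rewrite /Hc concat2_1 /b' concat2_1 /c G1 //.
  by rewrite jX_val.
Qed.
End part1.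


Lemma sub_or_prop {T : Type} (A : set T) (d : set_type A) (x : T) (P : T -> Prop) :
  P (sval d) -> P x -> P (sval (sub_or d x)).
Proof. by rewrite /sub_or; case: pselect. Qed.

Lemma sub_or_same {T : Type} (A : set T) (d : set_type A) (x : T) :
  sval d = x -> sub_or d x = d.
Proof.
move=> e; rewrite /sub_or; case: pselect => // h.
by apply: sval_eq; rewrite !set_valE /= e.
Qed.

Lemma sub_or_to {T : Type} (A : set T) (d : set_type A) (x : T) (y : set_type A) :
  sval y = x -> sub_or d x = y.
Proof.
move=> e; rewrite /sub_or; case: pselect => h.
  by apply: sval_eq; rewrite !set_valE /= e.
by exfalso; apply: h; rewrite -e; exact: (set_valP y).
Qed.

Section part3.
Variables (R : realType) (B B' : topologicalType) (X : fpsp B) (lam : B' -> B).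
Let Y := pullback lam X.

Definition bw (w : fibprod Y) : B' := (sval (sval w).1).1.

Lemma bw2 (w : fibprod Y) : (sval (sval w).2).1 = bw w.
Proof. by have := set_valP w; rewrite /fibprod_set /= => h; rewrite /bw; symmetry; exact: h. Qed.

Lemma qmem (w : fibprod Y) : fibprod_set X ((sval (sval w).1).2, (sval (sval w).2).2).
Proof.
rewrite /fibprod_set /=.
have h1 := set_valP (sval w).1; have h2 := set_valP (sval w).2.
rewrite /pullback_set /= in h1 h2; rewrite -[in LHS]h1 -h2.
by have := set_valP w; rewrite /fibprod_set /= => ->.
Qed.

Definition qY (w : fibprod Y) : fibprod X :=
  sub_or (fp_s (fibprod X) (lam (bw w))) ((sval (sval w).1).2, (sval (sval w).2).2).

Lemma qY_val w : sval (qY w) = ((sval (sval w).1).2, (sval (sval w).2).2).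
Proof. by rewrite /qY sub_orEs //; exact: qmem. Qed.

Lemma qY_cont : continuous qY.
Proof.
move=> w; apply: (sub_or_at (A := fibprod_set X) (d := fun w => fp_s (fibprod X) (lam (bw w)))
  (g := fun w : fibprod Y => ((sval (sval w).1).2, (sval (sval w).2).2))); last first.
  by apply: all_near; exact: qmem.
apply: pair_at.
  apply: (comp_at (f := fun w : fibprod Y => sval (sval w).1) (g := snd)); last exact: snd_at.
  apply: (comp_at (f := fun w : fibprod Y => (sval w).1)); last exact: val_at.
  apply: (comp_at (g := fst)); [exact: val_at | exact: fst_at].
apply: (comp_at (f := fun w : fibprod Y => sval (sval w).2) (g := snd)); last exact: snd_at.
apply: (comp_at (f := fun w : fibprod Y => (sval w).2)); last exact: val_at.
apply: (comp_at (g := snd)); [exact: val_at | exact: snd_at].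
Qed.

Lemma bw_cont : continuous bw.
Proof.
move=> w; apply: (comp_at (f := fun w : fibprod Y => sval (sval w).1) (g := fst)); last exact: fst_at.
apply: (comp_at (f := fun w : fibprod Y => (sval w).1)); last exact: val_at.
apply: (comp_at (g := fst)); [exact: val_at | exact: fst_at].
Qed.

Lemma qY_s (b : B') : qY (fp_s (fibprod Y) b) = fp_s (fibprod X) (lam b).
Proof. by apply: sval_eq; rewrite !set_valE /= qY_val. Qed.

Lemma part3 (U : set (fibprod X)) :
  fp_sectional R (@Pi R B X) U -> fp_sectional R (@Pi R B' Y) (qY @^-1` U).
Proof.
case=> oU sU [sig [csig psig ssig [G [cG pG sG G0 G1]]]].
have cGat : forall z t, U z -> {for (z, t), continuous G}.
  by move=> z t Uz; apply: (within_open_at (openXT oU) cG).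
have csat : forall z, U z -> {for z, continuous sig}.
  by move=> z Uz; apply: (within_open_at oU csig).
have oV : open (qY @^-1` U) by apply: open_comp => // x _; exact: qY_cont.
have nV : forall w (t : II R), U (qY w) -> \forall p \near (w, t), U (qY p.1).
  move=> w t Uw; apply: (near_mono (P := (qY @^-1` U) `*` [set: II R])); first by move=> p [].
  by apply: near_open; [exact: openXT | by []].
have pq : forall w, fp_p X (sval (qY w)).1 = lam (bw w).
  by move=> w; rewrite qY_val /=; have := set_valP (sval w).1; rewrite /pullback_set /= => ->.
have pal : forall w (t : II R), U (qY w) -> fp_p X ((sval (sig (qY w))).2 t) = lam (bw w).
  move=> w t Uw; have [_ h] := set_valP (sig (qY w)); rewrite h -pq.
  by have := psig (qY w) Uw; rewrite /= ?set_valE => ->.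
have pG1 : forall w (t : II R), U (qY w) -> fp_p X (sval (G (qY w, t))).1 = lam (bw w).
  by move=> w t Uw; have := pG (qY w) t Uw; rewrite /= ?set_valE => ->.
have pG2 : forall w (t : II R), U (qY w) -> fp_p X (sval (G (qY w, t))).2 = lam (bw w).
  by move=> w t Uw; have := set_valP (G (qY w, t)); rewrite /fibprod_set /= => <-; exact: pG1.
pose F' (p : fibprod Y * II R) : Y :=
  sub_or (fp_s Y (bw p.1)) (bw p.1, (sval (sig (qY p.1))).2 p.2).
have F'p : forall p, fp_p Y (F' p) = bw p.1.
  move=> p; rewrite /= ?set_valE; apply: (sub_or_prop (P := fun z : B' * X => z.1 = bw p.1)) => //.
have cF' : forall w t, U (qY w) -> {for (w, t), continuous F'}.
  move=> w t Uw.
  apply: (sub_or_at (A := pullback_set lam X) (d := fun p : fibprod Y * II R => fp_s Y (bw p.1))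
    (g := fun p : fibprod Y * II R => (bw p.1, (sval (sig (qY p.1))).2 p.2))); last first.
    apply: (near_mono (P := fun p : fibprod Y * II R => U (qY p.1))); last exact: nV.
    by move=> p Up; rewrite /pullback_set /= pal.
  apply: pair_at.
    by apply: (comp_at (f := fst)); [exact: fst_at | exact: bw_cont].
  apply: (comp_at (f := fun p : fibprod Y * II R => ((sval (sig (qY p.1))).2 : {compact-open, II R -> X}, p.2))
     (g := fun q : {compact-open, II R -> X} * II R => q.1 q.2)); last first.
    apply: eval_at; [exact: II_compact | exact: II_regular |].
    by have [] := set_valP (sig (qY w)).
  apply: pair_at; last exact: snd_at.
  apply: (comp_at (f := fun p : fibprod Y * II R => sig (qY p.1)) (g := fun w : pathsp R X => (sval w).2)).
    apply: (comp_at (f := fun p : fibprod Y * II R => qY p.1)); last exact: csat.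
    by apply: (comp_at (f := fst)); [exact: fst_at | exact: qY_cont].
  apply: (comp_at (g := snd)); [exact: val_at | exact: snd_at].
pose g (w : fibprod Y) : B' * {compact-open, II R -> Y} :=
  (bw w, (curry F' w : {compact-open, II R -> Y})).
pose sig' (w : fibprod Y) : pathsp R Y := sub_or (fp_s (pathsp R Y) (bw w)) (g w).
have gmem : forall w, U (qY w) -> pathsp_set R Y (g w).
  by move=> w Uw; split; [move=> t; apply: slice_at; exact: cF' | move=> t; exact: F'p].
pose K1 (p : fibprod Y * II R) : Y := sub_or (fp_s Y (bw p.1)) (bw p.1, (sval (G (qY p.1, p.2))).1).
pose K2 (p : fibprod Y * II R) : Y := sub_or (fp_s Y (bw p.1)) (bw p.1, (sval (G (qY p.1, p.2))).2).
have K1p : forall p, fp_p Y (K1 p) = bw p.1.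
  move=> p; rewrite /= ?set_valE; apply: (sub_or_prop (P := fun z : B' * X => z.1 = bw p.1)) => //.
have K2p : forall p, fp_p Y (K2 p) = bw p.1.
  move=> p; rewrite /= ?set_valE; apply: (sub_or_prop (P := fun z : B' * X => z.1 = bw p.1)) => //.
have Kmem : forall p, fibprod_set Y (K1 p, K2 p).
  by move=> p; rewrite /fibprod_set /=; have := K1p p; have := K2p p; rewrite /= => -> ->.
pose K (p : fibprod Y * II R) : fibprod Y := sub_or (fp_s (fibprod Y) (bw p.1)) (K1 p, K2 p).
have Kval : forall p, set_val (K p) = (K1 p, K2 p) by move=> p; rewrite /K set_valE /= sub_orEs //.
have Us : forall b, U (qY (fp_s (fibprod Y) b)) by move=> b; rewrite qY_s; apply: sU; exists (lam b).
have sYv : forall b, sval (fp_s Y b) = (b, fp_s X (lam b)) by [].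
have pbm : forall b, pullback_set lam X (b, fp_s X (lam b)) by move=> b; rewrite /pullback_set /= fp_ps.
split; [exact: oV | by move=> _ [b _ <-]; apply: Us |].
exists sig'; split.
- rewrite continuous_open_subspace // => w /set_mem Uw.
  apply: (sub_or_at (A := pathsp_set R Y) (d := fun w : fibprod Y => fp_s (pathsp R Y) (bw w)) (g := g)).
    apply: pair_at; first exact: bw_cont.
    by apply: curry_at => v; exact: cF'.
  by apply: (near_mono gmem); exact: (near_open oV).
- by move=> w Uw; rewrite /= ?set_valE /sig' sub_orEs //; exact: gmem.
- move=> b; apply: sval_eq; rewrite !set_valE /= /sig' sub_orEs; last by apply: gmem; exact: Us.
  rewrite /g /=; congr pair; apply: funext => t; rewrite /curry /F' /=.
  apply: sval_eq; rewrite !set_valE /= qY_s ssig /= sub_orEs //.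
exists K; split.
- rewrite continuous_open_subspace; last exact: openXT.
  move=> [w t] /set_mem [/= Uw _].
  apply: (sub_or_at (A := fibprod_set Y) (d := fun p : fibprod Y * II R => fp_s (fibprod Y) (bw p.1))
    (g := fun p => (K1 p, K2 p))); last by apply: all_near; exact: Kmem.
  have cGq : {for (w, t), continuous (fun p : fibprod Y * II R => G (qY p.1, p.2))}.
    apply: (comp_at (f := fun p : fibprod Y * II R => (qY p.1, p.2)) (g := G)); last exact: cGat.
    apply: pair_at; last exact: snd_at.
    by apply: (comp_at (f := fst)); [exact: fst_at | exact: qY_cont].
  apply: pair_at.
    apply: (sub_or_at (A := pullback_set lam X) (d := fun p : fibprod Y * II R => fp_s Y (bw p.1))
      (g := fun p : fibprod Y * II R => (bw p.1, (sval (G (qY p.1, p.2))).1))); last first.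
      apply: (near_mono (P := fun p : fibprod Y * II R => U (qY p.1))); last exact: nV.
      by move=> p Up; rewrite /pullback_set /= pG1.
    apply: pair_at; first by apply: (comp_at (f := fst)); [exact: fst_at | exact: bw_cont].
    apply: (comp_at (f := fun p : fibprod Y * II R => G (qY p.1, p.2)) (g := fun z : fibprod X => (sval z).1)) => //.
    apply: (comp_at (g := fst)); [exact: val_at | exact: fst_at].
  apply: (sub_or_at (A := pullback_set lam X) (d := fun p : fibprod Y * II R => fp_s Y (bw p.1))
    (g := fun p : fibprod Y * II R => (bw p.1, (sval (G (qY p.1, p.2))).2))); last first.
    apply: (near_mono (P := fun p : fibprod Y * II R => U (qY p.1))); last exact: nV.
    by move=> p Up; rewrite /pullback_set /= pG2.
  apply: pair_at; first by apply: (comp_at (f := fst)); [exact: fst_at | exact: bw_cont].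
  apply: (comp_at (f := fun p : fibprod Y * II R => G (qY p.1, p.2)) (g := fun z : fibprod X => (sval z).2)) => //.
  apply: (comp_at (g := snd)); [exact: val_at | exact: snd_at].
- move=> w t Uw; have h := congr1 (fun z => (sval z.1).1) (Kval (w, t)); simpl in h.
  apply: (etrans h); exact: K1p.
- move=> b t; apply: sval_eq; rewrite Kval !set_valE /K1 /K2 /= qY_s sG /=.
  by congr pair; apply: sub_or_same.
- move=> w Uw; apply: sval_eq; rewrite Kval !set_valE /= /sig' sub_orEs; last exact: gmem.
  by rewrite /g /= /curry /K1 /K2 /= G0.
- move=> w Uw; apply: sval_eq; rewrite Kval !set_valE /K1 /K2 /= G1 // qY_val /=.
  rewrite [sval w]surjective_pairing; congr pair; apply: sub_or_to.
  + by rewrite /bw; case: (sval (sval w).1).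
  + by rewrite -bw2; case: (sval (sval w).2).
Qed.
End part3.


Lemma secat_mono (R : realType) (B B' : topologicalType) (E X : fpsp B) (E' X' : fpsp B')
  (f : E -> X) (f' : E' -> X') :
  (forall n, secat_le R f n -> secat_le R f' n) -> (secat R f' <= secat R f)%E.
Proof.
move=> h; rewrite /secat; apply: le_ereal_inf => _ [n hn <-]; exists n => //; exact: h.
Qed.

Lemma secat_le_pre (R : realType) (B B' : topologicalType) (E X : fpsp B) (E' X' : fpsp B')
  (f : E -> X) (f' : E' -> X') (j : X' -> X) n :
  (forall U, fp_sectional R f U -> fp_sectional R f' (j @^-1` U)) ->
  secat_le R f n -> secat_le R f' n.
Proof.
move=> h [Us [hU cov]]; exists (fun i => j @^-1` Us i); split.
  by move=> i hi; apply: h; exact: hU.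
by move=> x; have [i [hi Ui]] := cov (j x); exists i.
Qed.

Unset Implicit Arguments.

Theorem proposition3p3 (R : realType) (B : topologicalType) (X : fpsp B) :
  is_fpspace X ->
  ((fwcat R X <= fwTC R X)%E /\ (fwTC R X <= fwcat R (fibprod X))%E) /\
  (forall (B' : topologicalType) (lam : B' -> B), continuous lam ->
     (fwTC R (pullback lam X) <= fwTC R X)%E).
Proof.
case=> cp cs; split; [split|].
- apply: secat_mono => n; apply: (secat_le_pre (j := @jX B X)) => U.
  exact: part1.
- apply: secat_mono => n; apply: (secat_le_pre (j := id)) => U.
  exact: part2.
- move=> B' lam _; apply: secat_mono => n; apply: (secat_le_pre (j := @qY B B' X lam)) => U.
  exact: part3.
Qed.
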